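(* Let $C:=\sqrt{\frac{15+\sqrt{65}}{8}}$ and let $g:\mathbb{R}\to\mathbb{R}$ be $$g(z):=-\frac{2}{5}z^4+\frac{8}{5}Cz^3+\Big(\frac32-\frac{12}{5}C^2\Big)z^2+\Big(\frac85C^3-3C\Big)z+1 .$$ For $W=[w_1,w_2,w_3]$ with $w_1,w_2,w_3\in\mathbb{R}^3$, define $f(\cdot;W):\mathbb{R}^3\to\mathbb{R}^3$ by $f(x;W):=[g(\langle w_1,x\rangle),g(\langle w_2,x\rangle),g(\langle w_3,x\rangle)]^\top$. Then there exists such a $W$ for which $f(\cdot;W)$ has two distinct fixed points $p_1,p_2\in\mathbb{R}^3$ such that for each $i\in\{1,2\}$ there exist constants $\epsilon_i>0$, $c_i>0$ and $K_i\in[0,1)$ with the following property: for every initial point $x^{(0)}\in[p_{i,1}-\epsilon_i,p_{i,1}+\epsilon_i]\times\{1\}\times\{1\}$, the fixed-point iteration $x^{(t)}=f(x^{(t-1)};W)$ ($t\ge1$) converges to $p_i$, and for every $t\ge2$, $$\|x^{(t)}-p_i\|_\infty\le K_i^t\cdot c_i\epsilon_i .$$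
   Context: $p_{i,1}$ denotes the first coordinate of $p_i$; $\|\cdot\|_\infty$ is the $\ell_\infty$ norm. A fixed point of $F$ is a point $p$ with $F(p)=p$. *)

(* Defs.v *)
From Stdlib Require Import Reals.
Open Scope R_scope.

Definition vec3 : Type := (R * R * R)%type.

Definition v1 (x : vec3) : R := fst (fst x).
Definition v2 (x : vec3) : R := snd (fst x).
Definition v3 (x : vec3) : R := snd x.

Definition inner3 (w x : vec3) : R := v1 w * v1 x + v2 w * v2 x + v3 w * v3 x.

Definition sub3 (x y : vec3) : vec3 := (v1 x - v1 y, v2 x - v2 y, v3 x - v3 y).
Definition ninf (x : vec3) : R := Rmax (Rabs (v1 x)) (Rmax (Rabs (v2 x)) (Rabs (v3 x))).

Definition Cst : R := sqrt ((15 + sqrt 65) / 8).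

Definition g (z : R) : R :=
  - (2/5) * z ^ 4 + (8/5) * Cst * z ^ 3 + (3/2 - (12/5) * Cst ^ 2) * z ^ 2
  + ((8/5) * Cst ^ 3 - 3 * Cst) * z + 1.

Definition fW (w1 w2 w3 : vec3) (x : vec3) : vec3 :=
  (g (inner3 w1 x), g (inner3 w2 x), g (inner3 w3 x)).

Definition iterate (F : vec3 -> vec3) (x0 : vec3) (t : nat) : vec3 := Nat.iter t F x0.

Definition local_conv (F : vec3 -> vec3) (p : vec3) : Prop :=
  exists eps c K : R, 0 < eps /\ 0 < c /\ 0 <= K < 1 /\
    forall a : R, v1 p - eps <= a <= v1 p + eps ->
      Un_cv (fun t => ninf (sub3 (iterate F (a, 1, 1) t) p)) 0 /\
      forall t : nat, (2 <= t)%nat ->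
        ninf (sub3 (iterate F (a, 1, 1) t) p) <= K ^ t * c * eps.

(* Main.v *)
Require Import Defs.
From Stdlib Require Import Reals Lra Psatz.
Open Scope R_scope.

Definition Bc : R := 32768/91125.
Definition phi (z : R) : R := 64/45 * z ^ 2 - Bc * z ^ 4.
Definition aa : R := 32/45 * sqrt (15/8).

Lemma aa2 : aa ^ 2 = 128/135.
Proof.
  unfold aa. replace ((32/45 * sqrt (15/8))^2) with ((32/45)^2 * (sqrt (15/8) * sqrt (15/8))) by ring.
  rewrite sqrt_sqrt by lra. field.
Qed.

Lemma Cst_rel : 4 * (Cst ^ 2) ^ 2 - 15 * Cst ^ 2 + 10 = 0.
Proof.
  assert (H : Cst ^ 2 = (15 + sqrt 65) / 8).
  { unfold Cst. simpl. rewrite Rmult_1_r. apply sqrt_sqrt.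
    pose proof (sqrt_pos 65). lra. }
  rewrite H. assert (H2 : sqrt 65 * sqrt 65 = 65) by (apply sqrt_sqrt; lra).
  field_simplify. nra.
Qed.

Lemma g_shift : forall y, g (Cst + y) = 3/2 * y ^ 2 - 2/5 * y ^ 4.
Proof.
  intro y. pose proof Cst_rel as H.
  assert (E : g (Cst + y) = 3/2 * y ^ 2 - 2/5 * y ^ 4
     + (4 * (Cst ^ 2) ^ 2 - 15 * Cst ^ 2 + 10) / 10) by (unfold g; field).
  rewrite E, H. field.
Qed.

Lemma g_phi : forall z, g (aa * z + Cst) = phi z.
Proof.
  intro z. replace (aa * z + Cst) with (Cst + aa * z) by ring.
  rewrite g_shift. unfold phi, Bc.
  replace ((aa * z) ^ 2) with (aa ^ 2 * z ^ 2) by ring.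
  replace ((aa * z) ^ 4) with ((aa ^ 2) ^ 2 * z ^ 4) by ring.
  rewrite aa2. field.
Qed.

Lemma g0 : g 0 = 1.
Proof. unfold g. ring. Qed.

Definition w1 : vec3 := (aa, Cst, 0).
Definition w0 : vec3 := (0, 0, 0).
Definition FF := fW w1 w0 w0.

Lemma FF_eq : forall z, FF (z, 1, 1) = (phi z, 1, 1).
Proof.
  intro z. unfold FF, fW, inner3, w1, w0, v1, v2, v3; simpl.
  replace (aa * z + Cst * 1 + 0 * 1) with (aa * z + Cst) by ring.
  rewrite g_phi.
  replace (0 * z + 0 * 1 + 0 * 1) with 0 by ring. rewrite g0. reflexivity.
Qed.

Lemma iter_eq : forall z t, iterate FF (z, 1, 1) t = (Nat.iter t phi z, 1, 1).
Proof.
  intros z t. induction t as [|t IH]; [reflexivity|].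
  unfold iterate in *. simpl. rewrite IH. apply FF_eq.
Qed.

Lemma ninf_eq : forall y p, ninf (sub3 (y, 1, 1) (p, 1, 1)) = Rabs (y - p).
Proof.
  intros y p. unfold ninf, sub3, v1, v2, v3; simpl.
  rewrite Rminus_diag, Rabs_R0, (Rmax_left 0 0) by lra.
  apply Rmax_left. apply Rabs_pos.
Qed.

Lemma contr_iter : forall zs eps,
  (forall z, Rabs (z - zs) <= eps -> Rabs (phi z - zs) <= /2 * Rabs (z - zs)) ->
  forall z, Rabs (z - zs) <= eps -> forall t,
    Rabs (Nat.iter t phi z - zs) <= (/2) ^ t * Rabs (z - zs) /\ (/2) ^ t <= 1.
Proof.
  intros zs eps Hc z Hz t. induction t as [|t [IH1 IH2]].
  - simpl. lra.
  - simpl. pose proof (pow_le (/2) t ltac:(lra)).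
    pose proof (Rabs_pos (z - zs)).
    assert (Hb : Rabs (Nat.iter t phi z - zs) <= eps).
    { eapply Rle_trans; [exact IH1|]. nra. }
    split; [|lra].
    eapply Rle_trans; [apply Hc; exact Hb|]. nra.
Qed.

Lemma local_conv_gen : forall zs eps,
  0 < eps ->
  (forall z, Rabs (z - zs) <= eps -> Rabs (phi z - zs) <= /2 * Rabs (z - zs)) ->
  local_conv FF (zs, 1, 1).
Proof.
  intros zs eps He Hc. exists eps, 1, (/2).
  split; [lra|]. split; [lra|]. split; [lra|].
  intros a Ha. unfold v1 in Ha; simpl in Ha.
  assert (Hz : Rabs (a - zs) <= eps) by (apply Rabs_le; lra).
  assert (Hb : forall t, ninf (sub3 (iterate FF (a, 1, 1) t) (zs, 1, 1)) <= (/2) ^ t * eps).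
  { intro t. rewrite iter_eq, ninf_eq.
    destruct (contr_iter zs eps Hc a Hz t) as [H1 H2].
    pose proof (pow_le (/2) t ltac:(lra)). nra. }
  split.
  - intros e He'. 
    destruct (pow_lt_1_zero (/2) ltac:(rewrite Rabs_right; lra) (e / eps))
      as [N HN]; [apply Rdiv_lt_0_compat; lra|].
    exists N. intros n Hn. unfold Rdist. rewrite Rminus_0_r.
    specialize (HN n Hn). specialize (Hb n).
    rewrite iter_eq, ninf_eq in *. rewrite Rabs_Rabsolu.
    pose proof (pow_le (/2) n ltac:(lra)).
    rewrite Rabs_right in HN by lra.
    apply Rle_lt_trans with ((/2) ^ n * eps); [exact Hb|].
    apply Rmult_lt_reg_r with (/ eps); [apply Rinv_0_lt_compat; lra|].
    replace ((/2) ^ n * eps * / eps) with ((/2)^n) by (field; lra).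
    exact HN.
  - intros t _. rewrite Rmult_1_r. apply Hb.
Qed.

Lemma contr0 : forall z, Rabs (z - 0) <= 1/4 -> Rabs (phi z - 0) <= /2 * Rabs (z - 0).
Proof.
  intros z Hz. rewrite Rminus_0_r in *.
  assert (E : phi z = z ^ 2 * (64/45 - Bc * z ^ 2)) by (unfold phi; ring).
  rewrite E, Rabs_mult. unfold Bc.
  assert (Hz2 : z ^ 2 = Rabs z * Rabs z) by (rewrite <- (pow2_abs z); ring).
  pose proof (Rle_abs z). pose proof (Rle_abs (- z)). rewrite Rabs_Ropp in *.
  pose proof (Rabs_pos z).
  assert (Hq : Rabs (64 / 45 - 32768 / 91125 * z ^ 2) <= 64/45).
  { apply Rabs_le. nra. }
  rewrite (Rabs_right (z^2)) by (apply Rle_ge, pow2_ge_0). set (Q := Rabs (64 / 45 - 32768 / 91125 * z ^ 2)) in *.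
  rewrite Hz2. rewrite Rminus_0_r.
  assert (0 <= Rabs z * Rabs z) by nra.
  apply Rle_trans with (Rabs z * Rabs z * (64/45)); [apply Rmult_le_compat_l; lra|].
  nra.
Qed.

Lemma contr1 : forall z, Rabs (z - 45/32) <= 1/16 -> Rabs (phi z - 45/32) <= /2 * Rabs (z - 45/32).
Proof.
  intros z Hz. set (u := z - 45/32) in *.
  assert (E : phi z - 45/32 = u ^ 2 * (-128/45 - 4 * Bc * (45/32) * u - Bc * u ^ 2))
    by (unfold phi, u, Bc; field).
  rewrite E, Rabs_mult. unfold Bc.
  assert (Hz2 : u ^ 2 = Rabs u * Rabs u) by (rewrite <- (pow2_abs u); ring).
  pose proof (Rle_abs u). pose proof (Rle_abs (- u)). rewrite Rabs_Ropp in *.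
  pose proof (Rabs_pos u).
  assert (Hq : Rabs (-128/45 - 4 * (32768/91125) * (45/32) * u - 32768/91125 * u ^ 2) <= 3).
  { apply Rabs_le. nra. }
  rewrite (Rabs_right (u^2)) by (apply Rle_ge, pow2_ge_0). set (Q := Rabs (-128/45 - 4 * (32768/91125) * (45/32) * u - 32768/91125 * u ^ 2)) in *.
  rewrite Hz2.
  assert (0 <= Rabs u * Rabs u) by nra.
  apply Rle_trans with (Rabs u * Rabs u * 3); [apply Rmult_le_compat_l; lra|].
  nra.
Qed.

Theorem lemmaB4 :
  exists w1 w2 w3 : vec3, exists p1 p2 : vec3,
    p1 <> p2 /\
    fW w1 w2 w3 p1 = p1 /\ fW w1 w2 w3 p2 = p2 /\
    local_conv (fW w1 w2 w3) p1 /\ local_conv (fW w1 w2 w3) p2.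
Proof.
  exists w1, w0, w0, (0, 1, 1), (45/32, 1, 1).
  split; [intro H; injection H; lra|].
  split; [change (FF (0,1,1) = (0,1,1)); rewrite FF_eq; unfold phi; f_equal; f_equal; ring|].
  split; [change (FF (45/32,1,1) = (45/32,1,1)); rewrite FF_eq; unfold phi, Bc; f_equal; f_equal; field|].
  split.
  - apply (local_conv_gen 0 (1/4)); [lra|exact contr0].
  - apply (local_conv_gen (45/32) (1/16)); [lra|exact contr1].
Qed.
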